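(* Let $\Phi(z)=\frac{2z}{1+|z|^2}$. For $(\omega,s)\in\mathbb S^1\times(-1,1)$, let $\alpha\in(-\pi/2,\pi/2)$ and $\beta\in\mathbb S^1$ be determined by $\cos\alpha=\frac{1-s^2}{1+s^2}$, $\sin\alpha=\frac{-2s}{1+s^2}$, $\omega+\frac\pi2=\beta+\alpha+\pi$, and let $u(t)=\frac{1-s^2}{1+s^2}\tanh t$. Then $$\Phi(\gamma^{\mathrm v}_{\omega,s}(t))=\gamma^E_{\beta,\alpha}(u(t)),\quad t\in\mathbb R,\qquad\text{and}\qquad\frac{du}{dt}=\frac{1+s^2}{1-s^2}\,x^2(\gamma^{\mathrm v}_{\omega,s}(t)).$$ Moreover, in horocyclic coordinates, for $(\beta,a)\in\mathbb S^1\times\mathbb R$ and $t_0=-\log\sqrt{1+a^2}$, $$\Phi(\gamma_{\beta,a}(t+t_0))=\gamma^E_{\beta,\tan^{-1}a}\big(u(t)\big),\qquad u(t)=(1+a^2)^{-1/2}\tanh t.$$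
   Context: $x(z)=\frac{1-|z|^2}{1+|z|^2}$. Vertex parameterization of hyperbolic geodesics (Poincaré metric $\frac{4|dz|^2}{(1-|z|^2)^2}$ on the open unit disk): $\gamma^{\mathrm v}_{\omega,s}(t)=e^{i\omega}\frac{s+i\tanh(t/2)}{1+is\tanh(t/2)}$. Horocyclic parameterization: $\gamma_{\beta,a}(t)=e^{i\beta}\frac{(2+ia)\tanh(t/2)+ia}{ia\tanh(t/2)-2+ia}$. Euclidean geodesics (lines) in fan-beam coordinates: $\gamma^E_{\beta,\alpha}(u)=e^{i(\beta+\alpha+\pi)}(u+i\sin\alpha)$, $u\in[-\cos\alpha,\cos\alpha]$. *)

(* Defs.v *)
From Stdlib Require Import Reals.
From Coquelicot Require Import Coquelicot.

Open Scope R_scope.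

Definition cis (theta : R) : C := (cos theta, sin theta).

Definition Ci : C := (0, 1).

Definition xfun (z : C) : R := (1 - (Cmod z) ^ 2) / (1 + (Cmod z) ^ 2).

Definition Phi (z : C) : C := Cdiv (Cmult (RtoC 2) z) (RtoC (1 + (Cmod z) ^ 2)).

Definition gamma_v (omega s t : R) : C :=
  Cmult (cis omega)
    (Cdiv (Cplus (RtoC s) (Cmult Ci (RtoC (tanh (t / 2)))))
          (Cplus (RtoC 1) (Cmult Ci (RtoC (s * tanh (t / 2)))))).

Definition gamma_h (beta a t : R) : C :=
  Cmult (cis beta)
    (Cdiv (Cplus (Cmult (Cplus (RtoC 2) (Cmult Ci (RtoC a))) (RtoC (tanh (t / 2))))
                 (Cmult Ci (RtoC a)))
          (Cplus (Cminus (Cmult Ci (RtoC (a * tanh (t / 2)))) (RtoC 2))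
                 (Cmult Ci (RtoC a)))).

Definition gamma_E (beta alpha u : R) : C :=
  Cmult (cis (beta + alpha + PI)) (Cplus (RtoC u) (Cmult Ci (RtoC (sin alpha)))).

(* Main.v *)
Require Import Defs.
From Stdlib Require Import Reals.
From Coquelicot Require Import Coquelicot.
From Stdlib Require Import Lra Psatz ZArith Lia.
Open Scope R_scope.

Lemma tanh_exp x : tanh x = (exp x ^2 - 1)/(exp x ^2 + 1).
Proof.
  unfold tanh, sinh, cosh. rewrite exp_Ropp.
  assert (H := exp_pos x). field. split; nra.
Qed.

Lemma tanh_half x : tanh (x/2) = (exp x - 1)/(exp x + 1).
Proof.
  rewrite tanh_exp. replace (exp (x/2) ^2) with (exp x). reflexivity.
  simpl. rewrite Rmult_1_r, <- exp_plus. f_equal. field.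
Qed.

Lemma Cmod2 z : Cmod z ^ 2 = fst z ^2 + snd z ^2.
Proof.
  unfold Cmod. rewrite pow2_sqrt. reflexivity.
  apply Rplus_le_le_0_compat; apply pow2_ge_0.
Qed.

Lemma Cmod_cis_mult w z : Cmod (Cmult (cis w) z) ^ 2 = fst z ^2 + snd z ^2.
Proof.
  rewrite Cmod2. unfold cis; simpl.
  replace ((cos w * fst z - sin w * snd z) * ((cos w * fst z - sin w * snd z) * 1) +
   (cos w * snd z + sin w * fst z) * ((cos w * snd z + sin w * fst z) * 1))
  with ((sin w ^2 + cos w ^2) * (fst z * (fst z * 1) + snd z * (snd z * 1))) by ring.
  rewrite <- !Rsqr_pow2, sin2_cos2. ring.
Qed.

Lemma cos_per x k : cos (x + 2 * PI * IZR k) = cos x /\ sin (x + 2 * PI * IZR k) = sin x.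
Proof.
  destruct (Z_le_gt_dec 0 k) as [H|H].
  - destruct (IZN k H) as [n ->]. rewrite <- INR_IZR_INZ.
    replace (x + 2 * PI * INR n) with (x + 2 * INR n * PI) by ring.
    split; [apply cos_period | apply sin_period].
  - assert (H' : (0 <= - k)%Z) by lia. destruct (IZN _ H') as [n Hn].
    replace k with (- Z.of_nat n)%Z by lia. rewrite opp_IZR, <- INR_IZR_INZ.
    set (y := x + 2 * PI * - INR n).
    rewrite <- (cos_period y n), <- (sin_period y n). unfold y.
    replace (x + 2 * PI * - INR n + 2 * INR n * PI) with x by ring. split; reflexivity.
Qed.

Lemma ss_nz a b : 0 < a -> a*a + b*b <> 0.
Proof. intros; nra. Qed.
Lemma ss4 a b : 0 < a -> 4*(a*a) + b*b <> 0.
Proof. intros; nra. Qed.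
Lemma ss4_pos a b : 0 < a -> 0 < 4*(a*a) + b*b.
Proof. intros; nra. Qed.
Lemma ss_nz3 a b c : 0 < a -> a*a + (b*b + c*c) <> 0.
Proof. intros; nra. Qed.
Lemma ss_pos a b : 0 < a -> 0 < a*a + b*b.
Proof. intros; nra. Qed.
Ltac nz := first [ apply ss_nz3; apply ss_pos; nra | apply ss_nz3; first [apply ss4_pos; nra | nra] | apply ss_nz; first [apply ss4_pos; nra | nra]
                 | apply ss4; nra | apply Rgt_not_eq; nra ].

Theorem part2 :
  (forall beta a : R,
     let t0 := - ln (sqrt (1 + a ^ 2)) in
     let u := fun t : R => / sqrt (1 + a ^ 2) * tanh t in
     forall t : R,
       Phi (gamma_h beta a (t + t0)) = gamma_E beta (atan a) (u t)).
Proof.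
  intros beta a t0 u t.
  unfold Phi, gamma_h. rewrite Cmod_cis_mult.
  unfold gamma_E, cis, Ci, Cdiv, Cminus, u, t0.
  rewrite tanh_half, tanh_exp, exp_plus, exp_Ropp.
  assert (Hp : 0 < 1 + a^2) by nra.
  assert (Hc : 0 < sqrt (1 + a^2)) by (apply sqrt_lt_R0; lra).
  rewrite exp_ln by exact Hc.
  rewrite neg_cos, neg_sin, cos_plus, sin_plus, sin_atan, cos_atan, Rsqr_pow2.
  assert (Hcc : sqrt (1 + a^2) ^ 2 = 1 + a^2) by (apply pow2_sqrt; lra).
  set (c := sqrt (1 + a^2)) in *. clear u t0. clearbody c.
  assert (Hm : 0 < a + c) by nra.
  assert (E1 : (a+c)^2 - 1 = 2*a*(a+c)) by nra.
  assert (E2 : (a+c)^2 + 1 = 2*c*(a+c)) by nra.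
  assert (Ha : a = ((a+c)^2 - 1)/(2*(a+c))) by (rewrite E1; field; lra).
  assert (Hc' : c = ((a+c)^2 + 1)/(2*(a+c))) by (rewrite E2; field; lra).
  clear E1 E2.
  set (m := a + c) in *. clearbody m. subst c. subst a.
  assert (HE := exp_pos t). set (E := exp t) in *. clearbody E.
  apply injective_projections; simpl; field; repeat split; nz.
Qed.

Theorem part1 :
  (forall omega s alpha beta : R,
     -1 < s < 1 ->
     - (PI / 2) < alpha < PI / 2 ->
     cos alpha = (1 - s ^ 2) / (1 + s ^ 2) ->
     sin alpha = (- 2 * s) / (1 + s ^ 2) ->
     (exists k : Z, omega + PI / 2 = beta + alpha + PI + 2 * PI * IZR k) ->
     let u := fun t : R => (1 - s ^ 2) / (1 + s ^ 2) * tanh t in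
     forall t : R,
       Phi (gamma_v omega s t) = gamma_E beta alpha (u t) /\
       is_derive u t ((1 + s ^ 2) / (1 - s ^ 2) * (xfun (gamma_v omega s t)) ^ 2)).
Proof.
  intros omega s alpha beta Hs Ha Hca Hsa [k Hk] u t.
  assert (HE := exp_pos t).
  split.
  - unfold Phi, gamma_v. rewrite Cmod_cis_mult. unfold gamma_E, cis, Ci, Cdiv, Cminus, u.
    assert (Hth : beta + alpha + PI = (omega + PI/2) + 2*PI*IZR(-k)) by (rewrite opp_IZR; lra).
    rewrite Hth. destruct (cos_per (omega+PI/2) (-k)) as [H1 H2].
    rewrite H1, H2, cos_plus, sin_plus, cos_PI2, sin_PI2, Hsa.
    rewrite tanh_half, tanh_exp.
    set (E := exp t) in *. clearbody E.
    apply injective_projections; simpl; field; repeat split; nz.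
  - unfold u. unfold tanh, sinh, cosh. auto_derive.
    + rewrite exp_Ropp. assert (0 < / exp t) by (apply Rinv_0_lt_compat; lra). nra.
    + unfold xfun, gamma_v. rewrite Cmod_cis_mult. unfold Ci, Cdiv.
      rewrite tanh_half, exp_Ropp. simpl.
      set (E := exp t) in *. clearbody E.
      assert (0 < 1 - s^2) by nra.
      field; repeat split; try nz.
Qed.

Theorem proposition3p11 :
  (forall omega s alpha beta : R,
     -1 < s < 1 ->
     - (PI / 2) < alpha < PI / 2 ->
     cos alpha = (1 - s ^ 2) / (1 + s ^ 2) ->
     sin alpha = (- 2 * s) / (1 + s ^ 2) ->
     (exists k : Z, omega + PI / 2 = beta + alpha + PI + 2 * PI * IZR k) ->
     let u := fun t : R => (1 - s ^ 2) / (1 + s ^ 2) * tanh t in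
     forall t : R,
       Phi (gamma_v omega s t) = gamma_E beta alpha (u t) /\
       is_derive u t ((1 + s ^ 2) / (1 - s ^ 2) * (xfun (gamma_v omega s t)) ^ 2))
  /\
  (forall beta a : R,
     let t0 := - ln (sqrt (1 + a ^ 2)) in
     let u := fun t : R => / sqrt (1 + a ^ 2) * tanh t in
     forall t : R,
       Phi (gamma_h beta a (t + t0)) = gamma_E beta (atan a) (u t)).
Proof. split; [exact part1 | exact part2]. Qed.
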